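(* Let $\mathcal{C}=\{C_3,C_4,C_5,\dots\}$ be the family of all cycles. For every integer $k\geq 2$, $\mathcal{E}_\mathcal{C}(k)=\mathcal{E}^*_\mathcal{C}(k)=\binom{k}{2}$, and the only multigraph $G$ (without isolated vertices) with $\operatorname{ex}(G,\mathcal{C})<k$ and $e(G)=\binom k2$ is $K_k$ (so $K_k$ is also the only extremal graph for $\mathcal{E}_\mathcal{C}(k)$).
   Context: Multigraphs are 2-uniform, may have parallel edges but no loops; $e(\cdot)$ counts edges with multiplicity. A pair of parallel edges is not a member of $\mathcal{C}$. $\operatorname{ex}(G,\mathcal{C})$ is the maximum number of edges of a sub-multigraph of $G$ containing no member of $\mathcal{C}$. $\mathcal{E}_\mathcal{C}(k):=\sup\{e(G): G\text{ simple}, \operatorname{ex}(G,\mathcal{C})<k\}$, $\mathcal{E}^*_\mathcal{C}(k):=\sup\{e(G): G\text{ multigraph}, \operatorname{ex}(G,\mathcal{C})<k\}$. Graphs have no isolated vertices. *)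

(* Defs.v *)
From mathcomp Require Import all_boot.
Set Implicit Arguments. Unset Strict Implicit. Unset Printing Implicit Defensive.

(* A (finite, loopless) multigraph on vertex set 'I_n is given by its
   multiplicity function m : m i j = number of parallel edges between i and j. *)
Definition multigraph (n : nat) (m : 'I_n -> 'I_n -> nat) : Prop :=
  (forall i j, m i j = m j i) /\ (forall i, m i i = 0).

Definition simple_graph (n : nat) (m : 'I_n -> 'I_n -> nat) : Prop :=
  multigraph m /\ (forall i j, m i j <= 1).

Definition nedges (n : nat) (m : 'I_n -> 'I_n -> nat) : nat :=
  \sum_(i < n) \sum_(j < n | i < j) m i j.

Definition no_isolated (n : nat) (m : 'I_n -> 'I_n -> nat) : Prop :=
  forall i, exists j, 0 < m i j.

(* sub-multigraph m' of m (on the same vertex set; isolated vertices of m'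
   do not matter for edge counts or cycles) *)
Definition sub_multigraph (n : nat) (m' m : 'I_n -> 'I_n -> nat) : Prop :=
  multigraph m' /\ (forall i j, m' i j <= m i j).

(* m contains a member of C = {C_3, C_4, ...}: a cycle through l >= 3
   distinct vertices v_0,...,v_{l-1} with v_t adjacent to v_{t+1 mod l}.
   (A pair of parallel edges is not a cycle in C.) *)
Definition has_cycle (n : nat) (m : 'I_n -> 'I_n -> nat) : Prop :=
  exists s : seq 'I_n, [/\ 3 <= size s, uniq s & cycle (fun x y => 0 < m x y) s].

(* ex(G, C) < k : every C-free sub-multigraph of G has fewer than k edges
   (i.e. the maximum of such edge counts is < k). *)
Definition ex_cycles_lt (n : nat) (m : 'I_n -> 'I_n -> nat) (k : nat) : Prop :=
  forall m', sub_multigraph m' m -> ~ has_cycle m' -> nedges m' < k.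

(* Main.v *)
Require Import Defs.
From mathcomp Require Import all_boot zify.
Set Implicit Arguments. Unset Strict Implicit. Unset Printing Implicit Defensive.

Definition S n (m : 'I_n -> 'I_n -> nat) := \sum_(i < n) \sum_(j < n) m i j.
Definition deg n (m : 'I_n -> 'I_n -> nat) v := \sum_(j < n) m v j.
Definition del n (m : 'I_n -> 'I_n -> nat) v :=
  fun i j => if (i == v) || (j == v) then 0 else m i j.

Lemma bin2_double k : ('C(k, 2)).*2 = k * k.-1.
Proof.
elim: k => [//|k IH]; rewrite binS bin1 doubleD IH; case: k {IH} => //= k; lia.
Qed.

Lemma nedgesS n (m : 'I_n -> 'I_n -> nat) : multigraph m -> (nedges m).*2 = S m.
Proof.
move=> [sym d0]; rewrite /nedges /S -addnn.
have E : \sum_(i < n) \sum_(j < n | i < j) m i j = \sum_(i < n) \sum_(j < n | j < i) m i j.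
  rewrite (exchange_big_dep predT) //=; apply: eq_bigr => i _; apply: eq_bigr => j _; exact: sym.
rewrite {2}E -big_split /=; apply: eq_bigr => i _.
rewrite [RHS](bigID (fun j : 'I_n => i < j)) /=; congr (_ + _).
rewrite [RHS](bigID (fun j : 'I_n => j < i)) /=.
rewrite [X in _ = _ + X]big1 ?addn0; last first.
  move=> j /andP[h1 h2]; have -> : j = i.
    by apply/val_inj/eqP; rewrite eqn_leq -!leqNgt in h1 h2 *; rewrite h1 h2.
  exact: d0.
by apply: eq_bigl => j; case: (ltngtP i j).
Qed.

Lemma Sdel n (m : 'I_n -> 'I_n -> nat) v : multigraph m ->
  S m = S (del m v) + (deg m v).*2.
Proof.
move=> [sym d0]; rewrite /S /deg /del [LHS](bigD1 v) //= [X in _ = X + _](bigD1 v) //=.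
rewrite eqxx /= big1_eq add0n.
have H : forall i, i != v -> \sum_(j < n) m i j = m i v + \sum_(j < n | j != v) (if (i == v) || (j == v) then 0 else m i j).
  move=> i iv; rewrite (bigD1 v) //=; congr (_ + _); apply: eq_bigr => j jv.
  by rewrite (negbTE iv) (negbTE jv).
rewrite (eq_bigr _ H) big_split /=.
rewrite [X in _ = X + _](eq_bigr (fun i => \sum_(j < n | j != v) (if (i == v) || (j == v) then 0 else m i j))); last first.
  move=> i iv; rewrite (bigD1 v) //= eqxx orbT add0n //.
have -> : \sum_(i < n | i != v) m i v = \sum_(j < n | j != v) m v j.
  apply: eq_bigr => i _; exact: sym.
have Dv : \sum_(j < n) m v j = \sum_(j < n | j != v) m v j by rewrite (bigD1 v) //= d0.
by rewrite Dv -addnn addnA addnC.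
Qed.

Lemma has_cycle_sub n (f g : 'I_n -> 'I_n -> nat) :
  (forall i j, f i j <= g i j) -> has_cycle f -> has_cycle g.
Proof.
move=> le [s [h1 h2 h3]]; exists s; split => //.
by apply: sub_cycle h3 => x y /= h; exact: leq_trans h (le x y).
Qed.

Lemma rot_front n (s : seq 'I_n) v (r : rel 'I_n) : v \in s -> 3 <= size s -> uniq s -> cycle r s ->
  exists a b t, [/\ 3 <= size (v :: a :: b :: t), uniq (v :: a :: b :: t) & cycle r (v :: a :: b :: t)].
Proof.
move=> vs h1 h2 h3; case: (rot_to vs) => i s' E.
have c : cycle r (v :: s') by rewrite -E rot_cycle.
have u : uniq (v :: s') by rewrite -E rot_uniq.
have z : size (v :: s') = size s by rewrite -E size_rot.
move: s' E c u z => [|a [|b t]] E c u z; rewrite -z in h1 => //.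
by exists a, b, t.
Qed.

Lemma touch_acyclic n (f : 'I_n -> 'I_n -> nat) v :
  (forall a b, a != v -> b != v -> f a b = 0) -> ~ has_cycle f.
Proof.
move=> H [s [h1 h2 h3]]; case: (boolP (v \in s)) => vs.
  have [a [b [t [_ u c]]]] := rot_front vs h1 h2 h3.
  move: u; rewrite /= !inE => /and3P[/norP[va /norP[vb _]] /norP [ab _] _].
  move: c => /= /and3P[_ ]; rewrite H // eq_sym //.
move: s h1 h2 h3 vs => [|x [|y t]] //= _ _ /andP[]; rewrite !inE => xy _ /norP[vx /norP[vy _]].
by move: xy; rewrite H // eq_sym.
Qed.

Definition addE n (f : 'I_n -> 'I_n -> nat) v u c :=
  fun i j => f i j + (if ((i == v) && (j == u)) || ((i == u) && (j == v)) then c else 0).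

Lemma pendant n (f : 'I_n -> 'I_n -> nat) v u c :
  ~ has_cycle f -> (forall j, f v j = 0) -> (forall j, f j v = 0) -> u != v ->
  ~ has_cycle (addE f v u c).
Proof.
move=> nf fv1 fv2 uv [s [h1 h2 h3]]; case: (boolP (v \in s)) => vs.
  have [a [b [t [_ un c']]]] := rot_front vs h1 h2 h3.
  move: c' => /= /and3P[e1 _]; rewrite rcons_path => /andP[_ e2].
  move: e1 e2; rewrite /addE fv1 fv2 !add0n eqxx /= (eq_sym v u) (negbTE uv) /= andbF andbT orbF.
  case: eqP => // au _; case: eqP => // wu _.
  move: un => /= /andP[_ /andP[]]; rewrite au -wu; move: (mem_last b t) => -> //.
apply: nf; exists s; split => //.
apply: (sub_in_cycle (P := fun x => x != v)) h3.
  move=> x y /= xv yv; rewrite /addE (negbTE xv) (negbTE yv) /= andbF addn0 //.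
by apply/allP => x xs /=; apply: contraNneq vs => <-.
Qed.

Lemma S_ext n (f g : 'I_n -> 'I_n -> nat) : (forall i j, f i j = g i j) -> S f = S g.
Proof. by move=> H; apply: eq_bigr => i _; apply: eq_bigr => j _. Qed.

Lemma S0 n : S (fun _ _ : 'I_n => 0) = 0.
Proof. by rewrite /S big1 // => i _; rewrite big1. Qed.

Definition star n (f : 'I_n -> 'I_n -> nat) v := fun i j => if (i == v) || (j == v) then f i j else 0.

Lemma deg_lt n (m : 'I_n -> 'I_n -> nat) k v : multigraph m -> ex_cycles_lt m k -> deg m v < k.
Proof.
move=> [sym d0] ex.
have mg : multigraph (star m v).
  split => [i j|i]; rewrite /star; last by case: ifP.
  by rewrite orbC sym.
have := ex (star m v) (conj mg _) _.
have H1 : forall i j, star m v i j <= m i j by move=> i j; rewrite /star; case: ifP.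
have H2 : ~ has_cycle (star m v).
  by apply: (touch_acyclic (v := v)) => a b /negbTE A /negbTE B; rewrite /star A B.
move=> /(_ H1 H2); rewrite -(leq_double (nedges _).+1) doubleS nedgesS // (Sdel v) //.
have -> : S (del (star m v) v) = 0.
  rewrite -(S0 n); apply: S_ext => i j; rewrite /del /star. by case: (_ || _).
have -> : deg (star m v) v = deg m v by apply: eq_bigr => j _; rewrite /star eqxx.
rewrite add0n -doubleS leq_double //.
Qed.

Lemma del_ex n (m : 'I_n -> 'I_n -> nat) k v u : multigraph m -> ex_cycles_lt m k ->
  0 < m v u -> ex_cycles_lt (del m v) (k - m v u).
Proof.
move=> [sym d0] ex muv f [[fs fd] fle] nf.
have uv : u != v by apply: contraTneq muv => ->; rewrite d0.
have fv1 : forall j, f v j = 0 by move=> j; move: (fle v j); rewrite /del eqxx /=; case: (f v j).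
have fv2 : forall j, f j v = 0 by move=> j; rewrite fs.
set g := addE f v u (m v u).
have mg : multigraph g.
  split => [i j|i]; rewrite /g /addE.
    rewrite fs; congr (_ + _); by rewrite orbC (andbC (i == v)) (andbC (i == u)).
  rewrite fd; case: (i =P v) => [->|]; rewrite ?(eq_sym v u) ?(negbTE uv) ?andbF //=.
have gle : forall i j, g i j <= m i j.
  move=> i j; rewrite /g /addE.
  case: (i =P v) => [->|iv].
    rewrite fv1 /= (eq_sym v u) (negbTE uv) /= orbF add0n.
    by case: (j =P u) => [->|].
  case: (j =P v) => [->|jv].
    rewrite fv2 /= andbT add0n.
    by case: (i =P u) => [->|] //; rewrite sym.
  rewrite andbF /= addn0; apply: (leq_trans (fle i j)); rewrite /del.
  by move/eqP/negbTE: iv => ->; move/eqP/negbTE: jv => ->.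
have := ex g (conj mg gle) (pendant (c := m v u) nf fv1 fv2 uv).
rewrite -(leq_double (nedges _).+1) doubleS nedgesS // (Sdel v) //.
have -> : S (del g v) = S f.
  apply: S_ext => i j; rewrite /del /g /addE.
  case: (i =P v) => [->|iv]; first by rewrite fv1.
  case: (j =P v) => [->|jv]; first by rewrite fv2.
  move/eqP/negbTE: iv => iv; move/eqP/negbTE: jv => jv. by rewrite /= andbF addn0.
have -> : deg g v = m v u.
  rewrite /deg (bigD1 u) //= big1 ?addn0; last first.
    move=> j ju; rewrite /g /addE fv1 (negbTE ju) /=. by rewrite andbF (eq_sym v u) (negbTE uv).
  by rewrite /g /addE fv1 !eqxx.
rewrite -nedgesS //; lia.
Qed.

Lemma zero_acyclic n : ~ has_cycle (fun _ _ : 'I_n => 0).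
Proof. by move=> [[|x [|y t]] [h1 _ /=]]. Qed.

Lemma zero_sub n (m : 'I_n -> 'I_n -> nat) : sub_multigraph (fun _ _ => 0) m.
Proof. by split. Qed.

Lemma ex_mono n (m : 'I_n -> 'I_n -> nat) a b : a <= b -> ex_cycles_lt m a -> ex_cycles_lt m b.
Proof. by move=> ab ex f h1 h2; apply: leq_trans (ex f h1 h2) ab. Qed.

Lemma del_mg n (m : 'I_n -> 'I_n -> nat) v : multigraph m -> multigraph (del m v).
Proof.
move=> [sym d0]; split => [i j|i]; rewrite /del; first by rewrite orbC sym.
by case: (_ || _).
Qed.

Lemma bound k : forall n (m : 'I_n -> 'I_n -> nat), multigraph m -> ex_cycles_lt m k ->
  S m <= k * k.-1.
Proof.
elim: k => [|k IH] n m mg ex.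
  by have := ex _ (zero_sub m) (@zero_acyclic n).
case: (pickP (fun p : 'I_n * 'I_n => 0 < m p.1 p.2)) => [[v u] /= muv|H].
  have ex' := ex_mono (m := del m v) (b := k) (leq_trans (leq_sub2l k.+1 muv) (leq_subr 0 k)) (del_ex mg ex muv).
  have := IH _ _ (del_mg v mg) ex'.
  have := deg_lt v mg ex.
  rewrite (Sdel v mg); move=> h1 h2; case: k {IH ex' ex} h1 h2 => [|k] /=; nia.
rewrite (S_ext (g := fun _ _ => 0)) ?S0 // => i j.
by move: (H (i, j)) => /=; case: (m i j).
Qed.

Lemma arith k mu d a : 2 <= k -> k * k.-1 = a + d.*2 -> a <= (k - mu) * (k - mu).-1 ->
  d < k -> 1 <= mu <= d -> mu = 1 /\ d = k.-1.
Proof. move=> *; nia. Qed.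

Lemma deg_ge n (m : 'I_n -> 'I_n -> nat) v u : m v u <= deg m v.
Proof. by rewrite /deg (bigD1 u) //= leq_addr. Qed.

Lemma uniq_ext k n (m : 'I_n -> 'I_n -> nat) : 2 <= k -> multigraph m -> no_isolated m ->
  ex_cycles_lt m k -> nedges m = 'C(k, 2) -> n = k /\ (forall i j, i != j -> m i j = 1).
Proof.
move=> k2 mg noi ex ne.
have Sm : S m = k * k.-1 by rewrite -nedgesS // ne bin2_double.
have key : forall v u, 0 < m v u -> m v u = 1 /\ deg m v = k.-1.
  move=> v u muv.
  apply: (arith (a := S (del m v)) k2).
  - by rewrite -Sm (Sdel v mg).
  - exact: bound (del_mg v mg) (del_ex mg ex muv).
  - exact: deg_lt.
  - by rewrite muv deg_ge.
have le1 : forall v u, m v u <= 1.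
  by move=> v u; case: (posnP (m v u)) => [->|/key[->]].
have dg : forall v, deg m v = k.-1.
  by move=> v; have [u /key[]] := noi v.
have nk : n = k.
  have : S m = n * k.-1.
    rewrite /S -/(deg m _) (eq_bigr (fun _ => k.-1)); last by move=> i _; exact: dg.
    by rewrite sum_nat_const card_ord.
  rewrite Sm => /eqP; rewrite eqn_pmul2r; last by case: k k2 {ex ne Sm key dg} => [|[|]].
  by move/eqP.
split => // i j ij.
have [_ d0] := mg.
have T : \sum_(l < n) (l != i : nat) = n.-1.
  rewrite (bigD1 i) //= eqxx add0n (eq_bigr (fun _ => 1)); last by move=> l ->.
  by rewrite sum1_card cardC1 card_ord.
move: T; rewrite (bigD1 j) //= eq_sym ij => T.
have : deg m i <= m i j + \sum_(l < n | l != j) (l != i : nat).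
  rewrite /deg (bigD1 j) //= leq_add2l; apply: leq_sum => l _.
  by case: eqP => [->|_]; rewrite ?d0 ?le1.
rewrite dg -nk -T; have := le1 i j; rewrite (_ : (true:nat) = 1) // leq_add2r; lia.
Qed.

Section Leaf.
Variables (n : nat) (f : 'I_n -> 'I_n -> nat).
Hypotheses (mg : multigraph f) (nf : ~ has_cycle f).
Let r := fun x y : 'I_n => 0 < f x y.

Definition has_leaf := exists z y, 0 < f z y /\ forall w, 0 < f z w -> w = y.

Lemma step s z y : uniq (z :: y :: s) -> path r z (y :: s) ->
  has_leaf \/ exists w, uniq (w :: z :: y :: s) /\ path r w (z :: y :: s).
Proof.
have [fs fd] := mg.
move=> hu hp.
case: (pickP (fun w => (0 < f z w) && (w != y))) => [w /andP[zw wy] | H]; last first.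
  left; exists z, y; split; first by case/andP: hp.
  by move=> w zw; move: (H w); rewrite zw /= => /negbFE/eqP.
case: (boolP (w \in z :: y :: s)) => wi; last first.
  right; exists w; split; first by rewrite cons_uniq wi hu.
  by rewrite -cat1s cat_path hp andbT /= /r fs zw.
exfalso; have wz : w != z by apply: contraTneq zw => ->; rewrite fd.
move: wi; rewrite !inE (negbTE wz) (negbTE wy) /= => ws.
case/splitPr: ws hu hp => s1 s2 hu hp.
apply: nf; exists (z :: y :: rcons s1 w); split.
- by rewrite /= size_rcons.
- move: hu; rewrite -cats1 -[z :: y :: (s1 ++ w :: s2)]/((z :: y :: s1) ++ w :: s2).
  rewrite -[w :: s2]/([:: w] ++ s2) catA cat_uniq => /andP[//].
- move: hp => /= /andP[h0]; rewrite cat_path => /andP[h1 /= /andP[h2 _]].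
  move: h0 h1 h2; rewrite /r => h0 h1 h2. rewrite h0 rcons_path rcons_path last_rcons h1 h2 /=. by rewrite fs zw.
Qed.

Lemma walk d : forall s z y, n - size (z :: y :: s) <= d -> uniq (z :: y :: s) ->
  path r z (y :: s) -> has_leaf.
Proof.
elim: d => [|d IH] s z y hd hu hp; (case: (step hu hp) => [//|[w [hu' hp']]]).
  move/card_uniqP: hu' => hu'; have := max_card (mem (w :: z :: y :: s)).
  rewrite hu' card_ord /=; move: hd => /=; lia.
by apply: (IH (y :: s) w z) => //; move: hd => /=; lia.
Qed.

Lemma leaf a b : 0 < f a b -> has_leaf.
Proof.
move=> ab; apply: (walk (d := n) (s := [::]) (z := a) (y := b)).
- by rewrite leq_subr.
- by rewrite /= inE andbT; apply: contraTneq ab => ->; rewrite mg.2.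
- by rewrite /= /r ab.
Qed.
End Leaf.

Definition noniso n (f : 'I_n -> 'I_n -> nat) := [set i | [exists j, 0 < f i j]].

Lemma forest_bound N : forall n (f : 'I_n -> 'I_n -> nat), S f <= N -> multigraph f ->
  (forall i j, f i j <= 1) -> ~ has_cycle f -> S f = 0 \/ S f + 2 <= (#|noniso f|).*2.
Proof.
elim: N => [|N IH] n f hS mg le1 nf; first by left; move: hS; case: (S f).
case: (pickP (fun p : 'I_n * 'I_n => 0 < f p.1 p.2)) => [[a b] /= ab|H]; last first.
  left; rewrite (S_ext (g := fun _ _ => 0)) ?S0 // => i j.
  by move: (H (i, j)) => /=; case: (f i j).
have [z [y [zy zl]]] := leaf mg nf ab.
have dz : deg f z = 1.
  rewrite /deg (bigD1 y) //= big1 ?addn0; last first.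
    by move=> j jy; case: (posnP (f z j)) => // /zl /eqP; rewrite (negbTE jy).
  by move: (le1 z y) zy; case: (f z y) => [|[]].
have Sf := Sdel z mg; rewrite dz in Sf.
have mg' := del_mg z mg.
have le' : forall i j, del f z i j <= f i j by move=> i j; rewrite /del; case: (_ || _).
have nf' : ~ has_cycle (del f z) by move/(has_cycle_sub le').
have hS' : S (del f z) <= N by move: hS; rewrite Sf /=; lia.
have sub : noniso (del f z) \subset noniso f :\ z.
  apply/subsetP => i; rewrite !inE => /existsP[j]; rewrite /del.
  case: eqP => //= /eqP iz; case: (_ == _) => //= ij.
  by apply/existsP; exists j.
have zin : z \in noniso f by rewrite inE; apply/existsP; exists y.
have c1 := subset_leq_card sub; rewrite [#|noniso f|](cardsD1 z) zin in c1 *.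
have [h0|h] := IH _ _ hS' mg' (fun i j => leq_trans (le' i j) (le1 i j)) nf'.
  right; rewrite Sf h0 /=.
  have yin : y \in noniso f :\ z.
    rewrite !inE; apply/andP; split.
      by apply: contraTneq zy => ->; rewrite mg.2.
    by apply/existsP; exists z; rewrite mg.1.
  have : 0 < #|noniso f :\ z| by apply/card_gt0P; exists y.
  move=> hc; move: hc c1; set c := #|_ :\ z|; rewrite -!addnn; lia.
right; rewrite Sf; move: c1 h; rewrite -!addnn; lia.
Qed.

Definition K (k : nat) : 'I_k -> 'I_k -> nat := fun i j => (i != j : nat).
Arguments K : clear implicits.

Lemma K_simple k : simple_graph (K k).
Proof. by split; [split => [i j|i]; rewrite /K ?eqxx // eq_sym | move=> i j; exact: leq_b1]. Qed.

Lemma sum_neq n (i : 'I_n) : \sum_(l < n) (l != i : nat) = n.-1.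
Proof.
rewrite (bigD1 i) //= eqxx add0n (eq_bigr (fun _ => 1)); last by move=> l ->.
by rewrite sum1_card cardC1 card_ord.
Qed.

Lemma K_edges k : nedges (K k) = 'C(k, 2).
Proof.
apply: double_inj; rewrite nedgesS; last exact: (K_simple k).1.
rewrite bin2_double /S (eq_bigr (fun _ => k.-1)); last by move=> i _; rewrite -(sum_neq i); apply: eq_bigr => j _; rewrite /K eq_sym.
by rewrite sum_nat_const card_ord.
Qed.

Lemma K_ex k : 0 < k -> ex_cycles_lt (K k) k.
Proof.
move=> k0 f [mg le] nf.
have le1 : forall i j, f i j <= 1 by move=> i j; apply: leq_trans (le i j) (leq_b1 _).
have h := nedgesS mg.
have c : #|noniso f| <= k by rewrite -[X in _ <= X](card_ord k); exact: max_card.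
case: (@forest_bound (S f) k f (leqnn _) mg le1 nf) => h'.
  by move: h; rewrite h' => /eqP; rewrite double_eq0 => /eqP ->.
move: h' c; rewrite -h -!addnn; lia.
Qed.

Unset Implicit Arguments.
Theorem theorem3p8 (k : nat) (hk : 2 <= k) :
  ((forall (n : nat) (m : 'I_n -> 'I_n -> nat),
      simple_graph m -> ex_cycles_lt m k -> nedges m <= 'C(k, 2)) /\
   (exists (n : nat) (m : 'I_n -> 'I_n -> nat),
      [/\ simple_graph m, ex_cycles_lt m k & nedges m = 'C(k, 2)])) /\
  ((forall (n : nat) (m : 'I_n -> 'I_n -> nat),
      multigraph m -> ex_cycles_lt m k -> nedges m <= 'C(k, 2)) /\
   (exists (n : nat) (m : 'I_n -> 'I_n -> nat),
      [/\ multigraph m, ex_cycles_lt m k & nedges m = 'C(k, 2)])) /\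
  (forall (n : nat) (m : 'I_n -> 'I_n -> nat),
      multigraph m -> no_isolated m -> ex_cycles_lt m k ->
      nedges m = 'C(k, 2) ->
      n = k /\ (forall i j, i != j -> m i j = 1)).
Proof.
have B : forall (n : nat) (m : 'I_n -> 'I_n -> nat),
      multigraph m -> ex_cycles_lt m k -> nedges m <= 'C(k, 2).
  by move=> n m mg ex; rewrite -leq_double nedgesS // bin2_double; exact: bound.
split; [split|split; [split|]].
- by move=> n m [mg _]; exact: B.
- by exists k, (K k); split; [exact: K_simple | apply: K_ex; lia | exact: K_edges].
- exact: B.
- by exists k, (K k); split; [exact: (K_simple k).1 | apply: K_ex; lia | exact: K_edges].
- by move=> n m; exact: uniq_ext.
Qed.
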